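(* Let $H$ be a subdirect product of $H_1 \times \cdots \times H_r$ and let $\pi_i\colon H \to H_i$ be the projection onto the $i$th factor. Assume that $N$ is a soluble normal subgroup of $H$ such that $H/N \cong T^\ell$, where $T$ is a nonabelian simple group and $\ell$ is a positive integer. Then there exist nonnegative integers $\ell_1, \dots, \ell_r$ with $\ell_1 + \cdots + \ell_r \geq \ell$ such that $H_i/N\pi_i \cong T^{\ell_i}$ for all $1 \leq i \leq r$.
   Context: $H$ is a subdirect product of $H_1\times\cdots\times H_r$ means $H \leq H_1\times\cdots\times H_r$ and each coordinate projection restricted to $H$ is surjective. $N\pi_i$ denotes the image of $N$ under $\pi_i$. *)

(* Defs.v *)
From HB Require Import structures.
From mathcomp Require Import all_boot all_fingroup all_solvable.
Set Implicit Arguments. Unset Strict Implicit. Unset Printing Implicit Defensive.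
Import GroupScope.
Local Open Scope group_scope.

Definition isog_pow (gT tT : finGroupType) (G : {set gT}) (T : {set tT})
  (l : nat) : Prop :=
  exists K : 'I_l -> {group gT},
    \big[dprod/1]_(j < l) (K j : {set gT}) = G /\ forall j, K j \isog T.

(* Main.v *)
Require Import Defs.
From HB Require Import structures.
From mathcomp Require Import all_boot all_fingroup all_solvable.
Import GroupScope.
Local Open Scope group_scope.
Set Implicit Arguments. Unset Strict Implicit. Unset Printing Implicit Defensive.


Fixpoint pw (gT tT : finGroupType) (T : {set tT}) (k : nat) (G : {set gT}) : Prop :=
  match k with
  | 0 => G = 1
  | k'.+1 => exists A B : {group gT}, [/\ A \x B = G, A \isog T & pw T k' B]
  end.

Lemma pw_iso (gT tT : finGroupType) (T : {set tT}) k (G : {group gT}) :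
  isog_pow G T k <-> pw T k G.
Proof.
elim: k G => [|k IH] G /=.
  split; first by case=> K [<- _]; rewrite big_ord0.
  by move=> ->; exists (fun j => 1%G); split; [rewrite big_ord0 | case].
split.
  case=> K [defG isoK]; rewrite big_ord_recl in defG.
  have [[A B eA eB] _ _ _] := dprodP defG.
  exists (K ord0), B; split => //; first by rewrite -eB.
  by apply/IH; exists (fun j => K (lift ord0 j)); split.
case=> A [B [defG isoA /IH [KB [defB isoKB]]]].
exists (fun j => if unlift ord0 j is Some j' then KB j' else A); split.
  by rewrite big_ord_recl unlift_none; under eq_bigr do rewrite liftK; rewrite defB.
by move=> j; case: unliftP => [j' _|_].
Qed.


Lemma pw_card (gT tT : finGroupType) (T : {group tT}) k (G : {group gT}) :
  pw T k G -> #|G| = (#|T| ^ k)%N.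
Proof.
elim: k G => [|k IH] G /=; first by move=> ->; rewrite cards1.
case=> A [B [defG isoA pB]]; rewrite -(dprod_card defG) (IH _ pB) (card_isog isoA).
by rewrite expnS.
Qed.

Lemma pw_injm (gT rT tT : finGroupType) (T : {group tT}) (D : {group gT})
  (f : {morphism D >-> rT}) k (G : {group gT}) :
  'injm f -> G \subset D -> pw T k G -> pw T k (f @* G).
Proof.
move=> injf; elim: k G => [|k IH] G /= sGD.
  by move=> ->; rewrite morphim1.
case=> A [B [defG isoA pB]].
have [_ eG _ _] := dprodP defG.
have sAD : A \subset D by rewrite (subset_trans _ sGD) // -eG mulG_subl.
have sBD : B \subset D by rewrite (subset_trans _ sGD) // -eG mulG_subr.
exists (f @* A)%G, (f @* B)%G; split.
- exact: injm_dprod.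
- by rewrite isog_sym (isog_trans _ (sub_isog _ _)) // isog_sym.
- exact: IH.
Qed.

Lemma pw_isog (gT rT tT : finGroupType) (T : {group tT}) k (G : {group gT}) (G' : {group rT}) :
  G \isog G' -> pw T k G -> pw T k G'.
Proof.
case/isogP=> f injf <-; exact: pw_injm.
Qed.

Lemma simple_nonsol (tT : finGroupType) (T : {group tT}) :
  simple T -> ~~ abelian T -> ~~ solvable T.
Proof.
move=> simT nabT; apply/negP=> solT.
by move: nabT; rewrite cyclic_abelian // prime_cyclic // simple_sol_prime.
Qed.


Lemma split_normal (gT : finGroupType) (G A B M : {group gT}) :
  A \x B = G -> simple A -> ~~ abelian A -> M <| G ->
  A \subset M \/ M \subset B.
Proof.
move=> defG simA nabA nsMG.
have [_ eG cBA tiAB] := dprodP defG.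
have [nsAG nsBG] := dprod_normal2 defG.
have [sAG nAG] := andP nsAG; have [sMG nMG] := andP nsMG.
have [_ /(_ (A :&: M)%G (normalGI sAG nsMG))] := simpleP _ simA.
case=> /= [tiAM | eAM]; last by left; apply/setIidPl.
right.
have Z1 : 'Z(A) = 1.
  have [_ /(_ _ (center_normal A))] := simpleP _ simA.
  case=> // /center_idP abA; by rewrite abA in nabA.
have cMA : M \subset 'C(A).
  apply/commG1P/trivgP; rewrite -tiAM setIC.
  apply: commg_subI; rewrite subsetI ?subxx /=.
    exact: subset_trans sMG nAG.
  exact: subset_trans sAG nMG.
apply/subsetP=> x Mx.
have Gx : x \in G by apply: (subsetP sMG).
have [y [z [Ay Bz exyz _]]] := mem_dprod defG Gx.
have Cz : z \in 'C(A) by apply: (subsetP cBA).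
have Cx : x \in 'C(A) by apply: (subsetP cMA).
have Cy : y \in 'C(A).
  have -> : y = x * z^-1 by rewrite exyz mulgK.
  by rewrite groupM ?groupV.
have : y \in 'Z(A) by rewrite inE Ay.
by rewrite Z1 inE => /eqP y1; rewrite exyz y1 mul1g.
Qed.

Lemma pw_sol1 (gT tT : finGroupType) (T : {group tT}) k :
  simple T -> ~~ abelian T ->
  forall (G M : {group gT}), pw T k G -> M <| G -> solvable M -> M :=: 1.
Proof.
move=> simT nabT; elim: k => [|k IH] G M /=.
  by move=> -> /andP[sM1 _] _; apply/trivgP.
case=> A [B [defG isoA pB]] nsMG solM.
have simA : simple A by rewrite (isog_simple isoA).
have nabA : ~~ abelian A by rewrite (isog_abelian isoA).
have [sAM | sMB] := split_normal defG simA nabA nsMG.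
  have : solvable A := solvableS sAM solM.
  by rewrite (isog_sol isoA) (negbTE (simple_nonsol simT nabT)).
have [_ eG _ _] := dprodP defG.
apply: (IH B) => //; apply: normalS sMB _ nsMG.
by rewrite -eG mulG_subr.
Qed.


Lemma pw_quo (gT tT : finGroupType) (T : {group tT}) k :
  simple T -> ~~ abelian T ->
  forall (G M : {group gT}), pw T k G -> M <| G -> exists m, pw T m (G / M).
Proof.
move=> simT nabT; elim: k => [|k IH] G M /=.
  by move=> -> _; exists 0; rewrite /= quotient1.
case=> A [B [defG isoA pB]] nsMG.
have simA : simple A by rewrite (isog_simple isoA).
have nabA : ~~ abelian A by rewrite (isog_abelian isoA).
have [_ eG cBA tiAB] := dprodP defG.
have [sMG nMG] := andP nsMG.
have sBG : B \subset G by rewrite -eG mulG_subr.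
have sAG : A \subset G by rewrite -eG mulG_subl.
have nMB : B \subset 'N(M) := subset_trans sBG nMG.
have nMA : A \subset 'N(M) := subset_trans sAG nMG.
have [sAM | sMB] := split_normal defG simA nabA nsMG.
  have eGM : G / M = B / M.
    by rewrite -eG -quotientMidl mulgA mulGSid // quotientMidl.
  have nsBM : (B :&: M)%G <| B := normalGI sBG nsMG.
  have [m pm] := IH B _ pB nsBM.
  exists m; rewrite eGM; apply: pw_isog pm.
  by rewrite /= setIC; apply: second_isog.
have nsMB : M <| B := normalS sMB sBG nsMG.
have [m pm] := IH B M pB nsMB.
have tiMA : M :&: A = 1.
  by apply/trivgP; rewrite -tiAB setIC; apply: setSI.
exists m.+1, (A / M)%G, (B / M)%G; split => //.
- apply: cprod_card_dprod.
    exact: (morphim_cprod (coset_morphism M) nMG (dprodWcp defG)).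
  rewrite (card_isog (isog_symr (quotient_isog nMA tiMA))).
  rewrite !card_quotient //; apply: eq_leq; apply/eqP.
  rewrite -(eqn_pmul2l (cardG_gt0 M)) mulnCA (Lagrange (normal_sub nsMB)).
  by rewrite (Lagrange sMG) (dprod_card defG).
- exact: isog_trans (isog_symr (quotient_isog nMA tiMA)) isoA.
Qed.


Lemma index_capI (gT : finGroupType) (G A B : {group gT}) :
  A \subset G -> B \subset G -> #|G : A :&: B| <= #|G : A| * #|G : B|.
Proof.
move=> sAG sBG.
rewrite -(Lagrange_index sAG (subsetIl A B)) leq_mul2l; apply/orP; right.
rewrite -(@leq_pmul2r (#|A :&: B| * #|B|)) ?muln_gt0 ?cardG_gt0 //.
rewrite mulnA [(#|A : _| * _)%N]mulnC (Lagrange (subsetIl A B)) mul_cardG.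
rewrite [X in _ <= X]mulnC -mulnA (Lagrange sBG) [X in _ <= X]mulnC leq_mul2r; apply/orP; right.
exact: subset_leq_card (mul_subG sAG sBG).
Qed.

Lemma group_set_bigcap_seq (gT : finGroupType) (I : Type) (s : seq I) (F : I -> {group gT}) :
  group_set (\bigcap_(i <- s) F i).
Proof.
by elim/big_rec: _ => [|i G _ gG]; rewrite -1?(insubdK 1%G gG) groupP.
Qed.

Canonical bigcap_seq_group (gT : finGroupType) (I : Type) (s : seq I) (F : I -> {group gT}) :=
  group (group_set_bigcap_seq s F).

Lemma index_bigcap (gT : finGroupType) (G : {group gT}) (I : Type) (s : seq I)
  (K : I -> {group gT}) : (forall i, K i \subset G) ->
  #|G : G :&: \bigcap_(i <- s) K i| <= \prod_(i <- s) #|G : K i|.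
Proof.
move=> sKG; elim: s => [|i s IH]; first by rewrite !big_nil setIT indexgg.
rewrite !big_cons setICA.
apply: leq_trans (@index_capI _ G (K i) (setI_group G (bigcap_seq_group s K)) (sKG i) (subsetIl _ _)) _.
by rewrite leq_mul2l IH orbT.
Qed.

Unset Implicit Arguments. Set Strict Implicit.

Theorem corollary2p6 (gT rT tT : finGroupType) (r : nat)
  (H N : {group gT}) (Hi : 'I_r -> {group rT})
  (pi : forall i : 'I_r, {morphism H >-> rT})
  (pi_onto : forall i, pi i @* H = Hi i)
  (pi_inj : H :&: \bigcap_(i < r) 'ker (pi i) = 1)
  (T : {group tT}) (l : nat)
  (nsNH : N <| H) (solN : solvable N)
  (simT : simple T) (nabT : ~~ abelian T) (l_gt0 : (0 < l)%N)
  (isoHN : isog_pow (H / N) T l) :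
  exists ls : 'I_r -> nat,
    (l <= \sum_(i < r) ls i)%N /\
    forall i, isog_pow (Hi i / (pi i @* N)) T (ls i).
Proof.
pose q i := quotm_morphism (pi i) nsNH.
have nsK : forall i, 'ker (q i) <| H / N := fun i => ker_normal (q i).
have imq : forall i, q i @* (H / N) = Hi i / pi i @* N.
  by move=> i; rewrite morphim_quotm pi_onto.
have pQ : pw T l (H / N)%G := (pw_iso _ _ _).1 isoHN.
have T1 : 1 < #|T| by rewrite cardG_gt1; case/simpleP: simT.
pose ls i := trunc_log #|T| #|Hi i / pi i @* N|.
have pls : forall i, pw T (ls i) (Hi i / pi i @* N)%G.
  move=> i; have [m pm] := pw_quo simT nabT pQ (nsK i).
  have pm' : pw T m (Hi i / pi i @* N)%G.
    apply: pw_isog pm; rewrite /= -imq; exact: first_isog.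
  by rewrite /ls (pw_card pm') trunc_expnK.
exists ls; split; last by move=> i; apply/(pw_iso _ _ (Hi i / pi i @* N)%G).
pose M := (H / N) :&: \bigcap_(i < r) 'ker (q i).
have nsM : M <| H / N.
  apply/andP; split; first exact: subsetIl.
  apply: normsI; first exact: normG.
  apply: norms_bigcap; apply/bigcapsP => i _; exact: normal_norm (nsK i).
pose L := coset N @*^-1 M.
have sLH : L \subset H.
  by rewrite -(quotientGK nsNH); apply: morphpreS; apply: subsetIl.
have eM : L / N = M.
  apply: morphpreK; apply: subset_trans (subsetIl _ _) _.
  exact: quotientS (normal_norm nsNH).
have piL : forall i, pi i @* L \subset pi i @* N.
  move=> i; apply/subsetP => y /morphimP [x Dx Lx ->].
  have Hx := subsetP sLH x Lx.
  move/morphpreP: Lx => [nNx]; rewrite /M inE => /andP[_ /bigcapP Kx].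
  move: (Kx i isT) => /(kerP (q i) (mem_quotient N Hx)); rewrite /= quotmE // => /coset_idr; apply.
  apply: (subsetP (normal_norm (morphim_normal (pi i) nsNH))).
  exact: mem_morphim.
have key : forall (s : seq 'I_r) (Y : {group gT}), Y \subset L ->
    solvable (Y :&: \bigcap_(i <- s) 'ker (pi i)) -> solvable Y.
  elim=> [|i s IHs] Y sYL; first by rewrite big_nil setIT.
  rewrite big_cons setIA => solY'.
  have sYH := subset_trans sYL sLH.
  have solYK : solvable (Y :&: 'ker (pi i)).
    exact: (IHs (Y :&: 'ker (pi i))%G (subset_trans (subsetIl _ _) sYL) solY').
  rewrite (series_sol (normalGI sYH (ker_normal (pi i)))) solYK /=.
  rewrite (isog_sol (first_isog_loc (pi i) sYH)).
  apply: solvableS (morphim_sol (pi i) solN).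
  exact: subset_trans (morphimS _ sYL) (piL i).
have solL : solvable L.
  apply: (key (index_enum _) (coset N @*^-1 M)%G); first exact: subxx.
  by apply: solvableS (solvable1 _); apply: subset_trans (setSI _ sLH) _; rewrite pi_inj.
have solM : solvable M by rewrite -eM quotient_sol.
have M1 : M :=: 1 := pw_sol1 simT nabT pQ nsM solM.
have hidx : #|H / N : M| <= \prod_(i < r) #|H / N : 'ker (q i)|.
  exact: (@index_bigcap _ (H / N)%G _ (index_enum _) (fun i => ('ker (q i))%G)
            (fun i => normal_sub (nsK i))).
move: hidx; rewrite M1 indexg1 (pw_card pQ).
rewrite (eq_bigr (fun i => #|T| ^ ls i)%N).
  by rewrite -expn_sum leq_exp2l.
move=> i _; rewrite -card_quotient ?normal_norm //.
by rewrite (card_isog (first_isog (q i))) /= imq (pw_card (pls i)).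
exact: nsK.
Qed.
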